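(* For any $n$-qubit pure states $\ket{\psi},\ket{\phi}$, $$|\mathcal{C}(\ket{\psi})-\mathcal{C}(\ket{\phi})|\le\sqrt2\,D_{tr}(\ket{\psi}\!\bra{\psi},\ket{\phi}\!\bra{\phi}).$$
   Context: $D_{tr}(\rho,\sigma)=\frac12\|\rho-\sigma\|_1$ is the trace distance. $\mathcal{C}(\ket{\psi})=1-\frac{1}{2^{n}}\sum_{\alpha\subseteq [n]}\mathrm{Tr}[\rho_\alpha^2]$, with $\rho_\alpha$ the reduced state of $\ket{\psi}$ on $\alpha$ and $\mathrm{Tr}[\rho_\emptyset^2]=1$. *)

(* Defs.v *)
From HB Require Import structures.
From mathcomp Require Import all_boot all_order all_algebra.
Set Implicit Arguments. Unset Strict Implicit. Unset Printing Implicit Defensive.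
Import Order.TTheory GRing.Theory Num.Theory.
Local Open Scope ring_scope.

(* Computational basis of n qubits: bit strings x : 'I_n -> bool. *)
Definition bits (n : nat) := {ffun 'I_n -> bool}.

Section Quantum.
Variable C : numClosedFieldType.
Variable n : nat.

(* A pure state is given by its amplitudes in the computational basis. *)
Definition is_pure_state (psi : bits n -> C) : Prop :=
  \sum_(x : bits n) `|psi x| ^+ 2 = 1.

(* Matrices on the 2^n-dimensional Hilbert space, indexed via enum_val. *)
Definition dim := #|{: bits n}|.

Definition proj (psi : bits n -> C) : 'M[C]_dim :=
  \matrix_(i, j) (psi (enum_val i) * (psi (enum_val j))^*).

Definition adjmx (m : nat) (A : 'M[C]_m) : 'M[C]_m := map_mx Num.conj A^T.

Definition eigenvalues (m : nat) (A : 'M[C]_m) : seq C :=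
  sval (closed_field_poly_normal (char_poly A)).

(* Trace norm: sum of singular values = sum of square roots of the
   eigenvalues of A^dagger A. *)
Definition trace_norm (m : nat) (A : 'M[C]_m) : C :=
  \sum_(z <- eigenvalues (adjmx A *m A)) sqrtC z.

Definition trace_dist (m : nat) (rho sigma : 'M[C]_m) : C :=
  trace_norm (rho - sigma) / 2.

(* Reduced state on alpha.  Basis states of the subsystem alpha are
   represented by bit strings vanishing outside alpha; glue a c puts
   a on alpha and c on the complement. *)
Definition supported (alpha : {set 'I_n}) (x : bits n) : bool :=
  [forall i, (i \notin alpha) ==> ~~ x i].

Definition glue (alpha : {set 'I_n}) (a c : bits n) : bits n :=
  [ffun i => if i \in alpha then a i else c i].

Definition reduced (psi : bits n -> C) (alpha : {set 'I_n}) (a b : bits n) : C :=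
  \sum_(c : bits n | supported (~: alpha) c)
     psi (glue alpha a c) * (psi (glue alpha b c))^*.

Definition purity (psi : bits n -> C) (alpha : {set 'I_n}) : C :=
  \sum_(a : bits n | supported alpha a) \sum_(b : bits n | supported alpha b)
     reduced psi alpha a b * reduced psi alpha b a.

Definition lin_ent (psi : bits n -> C) : C :=
  1 - (2 ^+ n)^-1 * \sum_(alpha : {set 'I_n}) purity psi alpha.

End Quantum.

(* Main.v *)
Require Import Defs.
From HB Require Import structures.
From mathcomp Require Import all_boot all_order all_algebra.
From mathcomp Require Import ring.
Set Implicit Arguments. Unset Strict Implicit. Unset Printing Implicit Defensive.
Import Order.TTheory GRing.Theory Num.Theory.
Local Open Scope ring_scope.

Section Part1.
Variable C : numClosedFieldType.
Variable n : nat.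
Local Notation B := (bits n).
Local Notation T := (B * B)%type.

Definition res (al : {set 'I_n}) (x : B) : B := [ffun i => if i \in al then x i else false].

Lemma res_supp al (x : B) : supported al (res al x).
Proof. by apply/forallP => i; apply/implyP; rewrite ffunE => /negbTE ->. Qed.

Lemma res_glue al (a c : B) : supported al a -> res al (glue al a c) = a.
Proof.
move=> /forallP Ha; apply/ffunP => i; rewrite !ffunE.
case: ifP => hi; first by rewrite hi.
by have := Ha i; rewrite hi /= => /negbTE ->.
Qed.

Lemma resC_glue al (a c : B) : supported (~: al) c -> res (~: al) (glue al a c) = c.
Proof.
move=> /forallP Ha; apply/ffunP => i; rewrite !ffunE inE.
case: (boolP (i \in al)) => hi /=.
  by have := Ha i; rewrite inE hi /= => /negbTE ->.
by [].
Qed.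

Lemma glue_res al (x : B) : glue al (res al x) (res (~: al) x) = x.
Proof. by apply/ffunP => i; rewrite !ffunE inE; case: (i \in al). Qed.

Lemma glueA al (a b c d : B) : glue al (glue al a b) (glue al c d) = glue al a d.
Proof. by apply/ffunP => i; rewrite !ffunE; case: (i \in al). Qed.

Lemma glue_id al (x : B) : glue al x x = x.
Proof. by apply/ffunP => i; rewrite !ffunE; case: (i \in al). Qed.

Lemma sum_glue al (F : B -> C) :
  \sum_(a | supported al a) \sum_(c | supported (~: al) c) F (glue al a c)
  = \sum_x F x.
Proof.
rewrite pair_big_dep /=.
rewrite (reindex_onto (fun x => (res al x, res (~: al) x))
           (fun p : T => glue al p.1 p.2)) /=; last first.
  by move=> [a c] /= /andP [Ha Hc]; rewrite res_glue // resC_glue.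
apply: eq_big => x; first by rewrite !res_supp glue_res eqxx.
by rewrite glue_res.
Qed.

Definition sw (al : {set 'I_n}) (p : T) : T := (glue al p.2 p.1, glue al p.1 p.2).

Lemma purityE (psi : B -> C) al :
  purity psi al = \sum_(p : T) psi p.1 * psi p.2 * (psi (sw al p).1 * psi (sw al p).2)^*.
Proof.
rewrite -(pair_big xpredT xpredT (fun x y => psi x * psi y * (psi (glue al y x) * psi (glue al x y))^*)) /=.
rewrite -(sum_glue al).
under eq_bigr => a _ do under eq_bigr => c _ do rewrite -(sum_glue al).
rewrite /purity /reduced.
apply: eq_bigr => a Ha.
under [LHS]eq_bigr => b Hb do rewrite big_distrlr /=.
rewrite exchange_big /=.
apply: eq_bigr => c Hc; apply: eq_bigr => b Hb; apply: eq_bigr => c' Hc'.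
rewrite !glueA !rmorphM /=; ring.
Qed.


Local Notation V := {ffun T -> C}.

Definition scl (a : C) (u : V) : V := [ffun p => a * u p].

Definition ip (u v : V) : C := \sum_p u p * (v p)^*.
Definition kk : C := (2 ^+ n)^-1.
Definition Pi (v : V) : V := [ffun p => kk * \sum_(al : {set 'I_n}) v (sw al p)].

Lemma ipDl u v w : ip (u + v) w = ip u w + ip v w.
Proof. by rewrite /ip -big_split; apply: eq_bigr => p _; rewrite ffunE mulrDl. Qed.
Lemma ipDr u v w : ip u (v + w) = ip u v + ip u w.
Proof. by rewrite /ip -big_split; apply: eq_bigr => p _; rewrite ffunE rmorphD mulrDr. Qed.
Lemma ipNl u w : ip (- u) w = - ip u w.
Proof. by rewrite /ip -sumrN; apply: eq_bigr => p _; rewrite ffunE mulNr. Qed.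
Lemma ipNr u w : ip u (- w) = - ip u w.
Proof. by rewrite /ip -sumrN; apply: eq_bigr => p _; rewrite ffunE rmorphN mulrN. Qed.
Lemma ipBl u v w : ip (u - v) w = ip u w - ip v w.
Proof. by rewrite ipDl ipNl. Qed.
Lemma ipBr u v w : ip u (v - w) = ip u v - ip u w.
Proof. by rewrite ipDr ipNr. Qed.
Lemma ipZl (a : C) (u w : V) : ip (scl a u) w = a * ip u w.
Proof. by rewrite /ip mulr_sumr; apply: eq_bigr => p _; rewrite ffunE mulrA. Qed.
Lemma ipZr (a : C) (u w : V) : ip u (scl a w) = a^* * ip u w.
Proof.
rewrite /ip mulr_sumr; apply: eq_bigr => p _; rewrite ffunE rmorphM /=.
by rewrite mulrCA.
Qed.
Lemma ipC u v : ip v u = (ip u v)^*.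
Proof.
rewrite /ip rmorph_sum; apply: eq_bigr => p _.
by rewrite rmorphM /= conjCK mulrC.
Qed.
Lemma ip_ge0 u : 0 <= ip u u.
Proof. by apply: sumr_ge0 => p _; rewrite -normCK exprn_ge0. Qed.

Lemma kk_conj : kk^* = kk.
Proof. by rewrite /kk fmorphV rmorphXn /= conjC_nat. Qed.

Lemma PiD u v : Pi (u + v) = Pi u + Pi v.
Proof.
apply/ffunP => p; rewrite !ffunE -mulrDr -big_split /=.
by congr (_ * _); apply: eq_bigr => al _; rewrite ffunE.
Qed.
Lemma PiN u : Pi (- u) = - Pi u.
Proof.
apply/ffunP => p; rewrite !ffunE -mulrN -sumrN /=.
by congr (_ * _); apply: eq_bigr => al _; rewrite ffunE.
Qed.
Lemma PiB u v : Pi (u - v) = Pi u - Pi v.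
Proof. by rewrite PiD PiN. Qed.
Lemma PiZ (a : C) (u : V) : Pi (scl a u) = scl a (Pi u).
Proof.
apply/ffunP => p; rewrite !ffunE mulr_sumr mulr_sumr mulr_sumr.
by apply: eq_bigr => al _; rewrite ffunE mulrCA.
Qed.

Lemma sw_invol al : involutive (sw al).
Proof. by move=> [x y]; rewrite /sw /= !glueA !glue_id. Qed.

Definition symd (al be : {set 'I_n}) : {set 'I_n} := [set i | (i \in al) != (i \in be)].

Lemma symdK al : involutive (symd al).
Proof.
move=> be; apply/setP => i; rewrite !inE.
by case: (i \in al); case: (i \in be).
Qed.

Lemma sw_comp al be p : sw be (sw al p) = sw (symd al be) p.
Proof.
case: p => x y; rewrite /sw /=; congr pair; apply/ffunP => i; rewrite !ffunE !inE;
by case: (i \in al); case: (i \in be).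
Qed.

Lemma sum_sw al (F : T -> C) : \sum_p F (sw al p) = \sum_p F p.
Proof. by rewrite [RHS](reindex_inj (can_inj (sw_invol al))). Qed.

Lemma card_sets_C : \sum_(al : {set 'I_n}) (1 : C) = 2 ^+ n.
Proof.
rewrite sumr_const -cardsT -powersetT card_powerset cardsT card_ord.
by rewrite -natrX -mulr_natl mulr1.
Qed.

Lemma kk_card : kk * 2 ^+ n = 1.
Proof. by rewrite /kk mulVf // expf_neq0 // pnatr_eq0. Qed.

Lemma Pi_sa u v : ip u (Pi v) = ip (Pi u) v.
Proof.
rewrite /ip.
transitivity (kk * \sum_al \sum_p u p * (v (sw al p))^*).
  rewrite exchange_big mulr_sumr; apply: eq_bigr => p _.
  rewrite ffunE rmorphM /= kk_conj rmorph_sum /= !mulr_sumr; apply: eq_bigr => al _ /=; ring.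
transitivity (kk * \sum_al \sum_p u (sw al p) * (v p)^*).
  apply: congr1; apply: eq_bigr => al _.
  rewrite -(sum_sw al); apply: eq_bigr => p _; by rewrite sw_invol.
rewrite exchange_big mulr_sumr; apply: eq_bigr => p _.
by rewrite ffunE -mulrA mulr_suml.
Qed.

Lemma Pi_idem v : Pi (Pi v) = Pi v.
Proof.
apply/ffunP => p; rewrite !ffunE.
under eq_bigr => al _ do rewrite ffunE.
rewrite -mulr_sumr mulrA.
under eq_bigr => al _ do under eq_bigr => be _ do rewrite sw_comp.
under eq_bigr => al _ do rewrite (reindex_inj (can_inj (symdK al))) /=.
under eq_bigr => al _ do under eq_bigr => be _ do rewrite symdK.
rewrite sumr_const -[X in X *+ _]mulr1 -mulr_natr.
have -> : (#|{: {set 'I_n}}|%:R : C) = 2 ^+ n.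
  by rewrite -card_sets_C sumr_const.
rewrite mulr1; transitivity (kk * (kk * 2 ^+ n) * \sum_be v (sw be p)); first ring.
by rewrite kk_card mulr1.
Qed.

Lemma quad_exp (t : C) (v u : V) : t^* = t ->
  ip (scl t v - u) (scl t v - u) = t * (t * ip v v) - t * (ip v u + ip u v) + ip u u.
Proof. move=> tc; rewrite !ipBl !ipBr !ipZl !ipZr tc; ring. Qed.

Lemma key0 (X Y : V) : ip X X = 1 -> ip Y Y = 1 -> 0 <= ip X Y ->
  `|ip X (Pi X) - ip Y (Pi Y)| ^+ 2 <= 1 - ip X Y ^+ 2.
Proof.
move=> hX hY hc.
set c := ip X Y.
have cc : c^* = c by rewrite geC0_conj.
have hYX : ip Y X = c by rewrite ipC.
set d := ip X (Pi X) - ip Y (Pi Y).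
have dr : d^* = d.
  by rewrite /d rmorphB /= -!ipC -!Pi_sa.
set u := X - Y; set w := X + Y; set v := scl 2 (Pi w) - w.
have hu : ip u u = 2 - 2 * c.
  by rewrite /u !ipBl !ipBr hX hY hYX -/c; ring.
have hw : ip w w = 2 + 2 * c.
  by rewrite /w !ipDl !ipDr hX hY hYX -/c; ring.
have hv : ip v v = 2 + 2 * c.
  rewrite /v !ipBl !ipBr !ipZl !ipZr conjC_nat -!Pi_sa Pi_idem hw.
  ring.
have h4 : ip v u + ip u v = 4 * d.
  rewrite /v /u /w !(ipBl, ipBr, ipDl, ipDr, ipZl, ipZr) conjC_nat -!Pi_sa !PiD.
  rewrite !(ipDl, ipDr, ipNl, ipNr, PiN, PiD) hX hY hYX -/c /d.
  ring.
have Agt0 : 0 < 2 + 2 * c.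
  apply: (@lt_le_trans _ _ 2); first by rewrite ltr0n.
  by rewrite lerDl mulr_ge0 // ler0n.
have Ane0 : 2 + 2 * c != 0 by rewrite gt_eqF.
set t := 2 * d / (2 + 2 * c).
have tc : t^* = t.
  by rewrite /t !(rmorphM Num.conj_op) fmorphV /= dr (geC0_conj (ltW Agt0)) (geC0_conj (ler0n _ 2)).
have H0 := ip_ge0 (scl t v - u).
have E : ip (scl t v - u) (scl t v - u) = t * (t * ip v v) - t * (ip v u + ip u v) + ip u u.
  by rewrite quad_exp.
rewrite E hv hu h4 in H0.
have E2 : (2 + 2 * c) * (t * (t * (2 + 2 * c)) - t * (4 * d) + (2 - 2 * c))
          = 4 * (1 - c ^+ 2 - d ^+ 2).
  by rewrite /t; field.
have : 0 <= 4 * (1 - c ^+ 2 - d ^+ 2) by rewrite -E2 mulr_ge0 // ltW.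
rewrite pmulr_rge0 ?ltr0n // subr_ge0 => H.
by rewrite real_normK //; apply/CrealP.
Qed.

Lemma key (X Y : V) : ip X X = 1 -> ip Y Y = 1 ->
  `|ip X (Pi X) - ip Y (Pi Y)| ^+ 2 <= 1 - `|ip X Y| ^+ 2.
Proof.
move=> hX hY.
set c0 := ip X Y.
pose om : C := if c0 == 0 then 1 else c0 / `|c0|.
have nc : `|c0|^* = `|c0| by rewrite geC0_conj.
have hom : om * om^* = 1.
  rewrite /om; case: eqP => [_|/eqP h]; first by rewrite rmorph1 mulr1.
  have hn : `|c0| != 0 by rewrite normr_eq0.
  rewrite rmorphM /= fmorphV /= nc.
  transitivity ((c0 * c0^*) / `|c0| ^+ 2); first by field.
  by rewrite -normCK divff // expf_neq0.
have hom2 : om^* * c0 = `|c0|.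
  rewrite /om; case: eqP => [->|/eqP h]; first by rewrite normr0 mulr0.
  have hn : `|c0| != 0 by rewrite normr_eq0.
  rewrite rmorphM /= fmorphV /= nc.
  transitivity ((c0 * c0^*) / `|c0|); first by field.
  by rewrite -normCK expr2 mulfK.
have := @key0 X (scl om Y) hX.
move=> H.
have e1 : ip (scl om Y) (scl om Y) = 1 by rewrite ipZl ipZr hY mulr1.
have e2 : ip X (scl om Y) = `|c0| by rewrite ipZr hom2.
have e3 : ip (scl om Y) (Pi (scl om Y)) = ip Y (Pi Y).
  by rewrite PiZ ipZl ipZr mulrA hom mul1r.
by move: (H e1); rewrite e2 e3; apply; apply: normr_ge0.
Qed.

Local Notation D := (Defs.dim n).

Definition outer (x y : 'I_D -> C) : 'M[C]_D := \matrix_(i, j) (x i * (y j)^*).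
Definition dotv (x y : 'I_D -> C) : C := \sum_i (x i)^* * y i.

Lemma outer_mul x y z w : outer x y *m outer z w = dotv y z *: outer x w.
Proof.
apply/matrixP => i j; rewrite !mxE /dotv mulr_suml.
by apply: eq_bigr => k _; rewrite !mxE; ring.
Qed.

Lemma adj_outer x y : adjmx (outer x y) = outer y x.
Proof. by apply/matrixP => i j; rewrite !mxE rmorphM /= conjCK mulrC. Qed.

Lemma adjB (A1 A2 : 'M[C]_D) : adjmx (A1 - A2) = adjmx A1 - adjmx A2.
Proof. by apply/matrixP => i j; rewrite !mxE rmorphB. Qed.

Lemma tr_outer x y : \tr (outer x y) = \sum_i x i * (y i)^*.
Proof. by rewrite /mxtrace; apply: eq_bigr => i _; rewrite mxE. Qed.

Lemma dotvC x y : dotv y x = (dotv x y)^*.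
Proof. by rewrite /dotv rmorph_sum; apply: eq_bigr => i _; rewrite rmorphM /= conjCK mulrC. Qed.

Lemma sum_ev (F : B -> C) : \sum_(i < D) F (enum_val i) = \sum_x F x.
Proof.
rewrite (reindex (@enum_rank B)) /=; last first.
  by exists enum_val => x _; [rewrite enum_rankK | rewrite enum_valK].
by apply: eq_bigr => x _; rewrite enum_rankK.
Qed.

Lemma D_gt0 : (0 < D)%N.
Proof. by apply/card_gt0P; exists [ffun=> false]. Qed.


Lemma tr_outer2 x y : \tr (outer x y) = (dotv x y)^*.
Proof.
rewrite tr_outer /dotv rmorph_sum; apply: eq_bigr => i _.
by rewrite rmorphM /= conjCK mulrC.
Qed.

Lemma trace_dist_val (psi phi : B -> C) : is_pure_state psi -> is_pure_state phi ->
  trace_dist (proj psi) (proj phi) = sqrtC (1 - `|\sum_x (psi x)^* * phi x| ^+ 2).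
Proof.
move=> hpsi hphi.
set s := \sum_x (psi x)^* * phi x.
pose a := fun i : 'I_D => psi (enum_val i).
pose b := fun i : 'I_D => phi (enum_val i).
have haa : dotv a a = 1.
  rewrite /dotv (sum_ev (fun x => (psi x)^* * psi x)) -hpsi.
  by apply: eq_bigr => x _; rewrite normCKC.
have hbb : dotv b b = 1.
  rewrite /dotv (sum_ev (fun x => (phi x)^* * phi x)) -hphi.
  by apply: eq_bigr => x _; rewrite normCKC.
have hab : dotv a b = s by rewrite /dotv (sum_ev (fun x => (psi x)^* * phi x)).
have hba : dotv b a = s^* by rewrite dotvC hab.
have -> : proj psi = outer a a by [].
have -> : proj phi = outer b b by [].
set X := outer a a - outer b b.
set L := 1 - s * s^*.
have hadj : adjmx X = X by rewrite /X adjB !adj_outer.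
set M := adjmx X *m X.
have hM : M = outer a a + (- s) *: outer a b + (- s^*) *: outer b a + outer b b.
  rewrite /M [adjmx _]hadj /X mulmxBl !mulmxBr !outer_mul haa hbb hab hba.
  by apply/matrixP => i j; rewrite !mxE; ring.
have hXM : X *m M = L *: X.
  rewrite hM /X mulmxBl !mulmxDr -!scalemxAr !outer_mul haa hbb hab hba.
  by apply/matrixP => i j; rewrite !mxE /L; ring.
have hMM : M *m M = L *: M.
  by rewrite {1}/M [adjmx _]hadj -mulmxA hXM -scalemxAr /M [adjmx _]hadj.
have hr : char_poly M = \prod_(z <- eigenvalues M) ('X - z%:P).
  rewrite /eigenvalues; case: closed_field_poly_normal => r' /= hr'.
  by rewrite {1}hr' (monicP (char_poly_monic M)) scale1r.
set r := eigenvalues M in hr *.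
have hz : forall z, z \in r -> z = 0 \/ z = L.
  move=> z zr.
  have : root (char_poly M) z by rewrite hr root_prod_XsubC.
  rewrite -eigenvalue_root_char => /eigenvalueP [v hv vn0].
  have : v *m (M *m M) = (z * z) *: v by rewrite mulmxA hv -scalemxAl hv scalerA.
  rewrite hMM -scalemxAr hv scalerA => /eqP.
  rewrite -subr_eq0 -scalerBl scaler_eq0 (negbTE vn0) orbF subr_eq0 => /eqP e.
  have : z * (z - L) == 0 by rewrite mulrBr -e mulrC subrr.
  rewrite mulf_eq0 subr_eq0 => /orP [/eqP|/eqP]; by [left|right].
have hsum : \sum_(z <- r) z = \tr M.
  have ht := @char_poly_trace _ _ M D_gt0.
  have sz : size r = D.
    by have := size_char_poly M; rewrite hr size_prod_XsubC => -[].
  have hc := @coefPn_prod_XsubC _ r.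
  rewrite sz -lt0n D_gt0 -hr ht in hc.
  by apply: oppr_inj; rewrite -hc.
have htr : \tr M = 2 * L.
  rewrite hM !mxtraceD !mxtraceZ !tr_outer2 haa hbb hab hba /L rmorph1 conjCK.
  ring.
set K := \sum_(z <- r) ((z == L)%:R : C).
have hs1 : \sum_(z <- r) z = K * L.
  rewrite /K mulr_suml big_seq [in RHS]big_seq; apply: eq_bigr => z zr.
  case: (hz z zr) => ->; last by rewrite eqxx mul1r.
  by case: eqP => [<-|]; rewrite ?mulr0 ?mul0r.
have hs2 : \sum_(z <- r) sqrtC z = K * sqrtC L.
  rewrite /K mulr_suml big_seq [in RHS]big_seq; apply: eq_bigr => z zr.
  case: (hz z zr) => ->; last by rewrite eqxx mul1r.
  by case: eqP => [<-|]; rewrite ?sqrtC0 ?mulr0 ?mul0r.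
have hTN : trace_norm X = 2 * sqrtC L.
  rewrite /trace_norm -/M -/r hs2.
  have [->|L0] := eqVneq L 0; first by rewrite sqrtC0 !mulr0.
  have : K * L = 2 * L by rewrite -hs1 hsum htr.
  by move/(mulIf L0) ->.
rewrite /trace_dist hTN normCK mulrC mulKf //.
by rewrite pnatr_eq0.
Qed.


Definition tens (psi : B -> C) : V := [ffun p => psi p.1 * psi p.2].

Lemma ip_tens psi phi : ip (tens psi) (tens phi) = (\sum_x psi x * (phi x)^*) ^+ 2.
Proof.
transitivity (\sum_x \sum_y psi x * psi y * (phi x * phi y)^*).
  by rewrite pair_big; apply: eq_bigr => p _; rewrite !ffunE.
rewrite expr2 mulr_suml; apply: eq_bigr => x _; rewrite mulr_sumr.
by apply: eq_bigr => y _; rewrite rmorphM /=; ring.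
Qed.

Lemma sum_purity psi :
  \sum_(al : {set 'I_n}) purity psi al = 2 ^+ n * ip (tens psi) (Pi (tens psi)).
Proof.
have -> : ip (tens psi) (Pi (tens psi)) = kk * \sum_al purity psi al.
  rewrite /ip mulr_sumr; under [RHS]eq_bigr => al _ do rewrite purityE.
  rewrite -mulr_sumr exchange_big mulr_sumr; apply: eq_bigr => p _.
  rewrite !ffunE rmorphM /= kk_conj rmorph_sum /= !mulr_sumr.
  by apply: eq_bigr => al _; rewrite !ffunE; ring.
by rewrite mulrA mulrC (mulrC _ kk) kk_card mulr1.
Qed.

Lemma lin_entE psi : lin_ent psi = 1 - ip (tens psi) (Pi (tens psi)).
Proof. by rewrite /lin_ent sum_purity mulrA -/kk kk_card mul1r. Qed.

End Part1.

Theorem mainTheorem14 (C : numClosedFieldType) (n : nat)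
    (psi phi : bits n -> C) :
  is_pure_state psi -> is_pure_state phi ->
  `|lin_ent psi - lin_ent phi| <= sqrtC 2 * trace_dist (proj psi) (proj phi).
Proof.
move=> hpsi hphi.
rewrite trace_dist_val //.
set F := `|\sum_x (psi x)^* * phi x| ^+ 2.
have h1 : forall f : bits n -> C, is_pure_state f -> ip (tens f) (tens f) = 1.
  move=> f hf; rewrite ip_tens -hf; under eq_bigr => x _ do rewrite -normCK.
  by rewrite hf expr1n.
have hk := key (h1 _ hpsi) (h1 _ hphi).
have eF : `|ip (tens psi) (tens phi)| = F.
  rewrite ip_tens normrX /F -norm_conjC rmorph_sum /=.
  by congr (`|_| ^+ 2); apply: eq_bigr => x _; rewrite rmorphM /= conjCK mulrC.
rewrite eF in hk.
have eC : `|lin_ent psi - lin_ent phi| = `|ip (tens psi) (Pi (tens psi)) - ip (tens phi) (Pi (tens phi))|.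
  by rewrite !lin_entE -normrN; congr `|_|; ring.
rewrite eC.
set e := `|_ - _| in hk *.
have F0 : 0 <= F by rewrite /F exprn_ge0.
have F1 : F <= 1.
  have h0 : 0 <= e ^+ 2 by rewrite exprn_ge0 // /e normr_ge0.
  have := le_trans h0 hk.
  by rewrite subr_ge0 expr_le1.
have F1' : 0 <= 1 - F by rewrite subr_ge0.
rewrite -sqrtCM ?nnegrE ?ler0n //.
have he0 : 0 <= e by rewrite /e normr_ge0.
rewrite -(sqrCK he0) ler_sqrtC ?nnegrE ?exprn_ge0 ?mulr_ge0 ?ler0n //.
apply: le_trans hk _.
rewrite -subr_ge0.
have -> : 2 * (1 - F) - (1 - F ^+ 2) = (1 - F) * (1 - F) by ring.
exact: mulr_ge0.
Qed.
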